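(* Let $1 \le s \le r$ be fixed integers and let $n \ge r$. Let $H_1, H_2, \ldots$ be independent, each uniformly distributed over the $r$-element subsets of $[n] = \{1, \ldots, n\}$. An $s$-element subset $S \subseteq [n]$ is said to be collected by time $k$ if $S \subseteq H_t$ for some $t \le k$. Let $T^{(r,s)}$ be the smallest $k$ such that all $\binom{n}{s}$ $s$-element subsets of $[n]$ have been collected by time $k$. Then, as $n \to \infty$, \[ \frac{T^{(r,s)} - \binom{n}{s}\log\binom{n}{s}\big/\binom{r}{s}}{\binom{n}{s}\big/\binom{r}{s}} \] converges weakly to a standard Gumbel distribution, i.e. the distribution with cumulative distribution function $x \mapsto e^{-e^{-x}}$.
   Context: In each round $t$ one draws $r$ distinct coupons uniformly at random (without replacement) from $[n]$, independently across rounds; all $s$-subsets of the drawn $r$-set are marked as collected. *)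

(* Defs.v *)
From mathcomp Require Import all_boot all_order all_algebra.
From mathcomp Require Import all_classical all_reals all_analysis.
Set Implicit Arguments. Unset Strict Implicit. Unset Printing Implicit Defensive.
Import Order.TTheory GRing.Theory Num.Theory.
Local Open Scope ring_scope.

(* A history of the first k rounds: H t for t < k, each an r-subset of [n]
   (ground set [n] represented by 'I_n). *)
Definition valid_history (n r k : nat) (H : {ffun 'I_k -> {set 'I_n}}) : bool :=
  [forall t, #|H t| == r].

Definition all_collected (n s k : nat) (H : {ffun 'I_k -> {set 'I_n}}) : bool :=
  [forall S : {set 'I_n}, (#|S| == s) ==> [exists t, S \subset H t]].

(* P(T^{(r,s)} <= k): the first k rounds are i.i.d. uniform over the
   'C(n,r) r-subsets, so the law of (H_1..H_k) is uniform over valid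
   histories; T <= k iff all s-subsets are collected by time k. *)
Definition prob_T_le_nat (R : realType) (n r s k : nat) : R :=
  #|[set H : {ffun 'I_k -> {set 'I_n}} | valid_history r H && all_collected s H]|%:R
  / ('C(n, r) ^ k)%:R.

(* P(T^{(r,s)} <= y) for real y (T is integer valued). *)
Definition prob_T_le (R : realType) (n r s : nat) (y : R) : R :=
  if y < 0 then 0 else prob_T_le_nat R n r s (Num.truncn y).

(* Centering a_n = C(n,s) log C(n,s) / C(r,s) and scaling b_n = C(n,s)/C(r,s). *)
Definition center (R : realType) (n r s : nat) : R :=
  ('C(n, s))%:R * ln (('C(n, s))%:R) / ('C(r, s))%:R.
Definition scale (R : realType) (n r s : nat) : R :=
  ('C(n, s))%:R / ('C(r, s))%:R.

(* CDF of the normalized variable (T - a_n)/b_n at x: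
   P((T - a_n)/b_n <= x) = P(T <= a_n + b_n x) since b_n > 0 for n >= s. *)
Definition normalized_cdf (R : realType) (n r s : nat) (x : R) : R :=
  prob_T_le n r s (center R n r s + scale R n r s * x).

Definition gumbel_cdf (R : realType) (x : R) : R := expR (- expR (- x)).

(* Main.v *)
Require Import Defs.
From mathcomp Require Import all_boot all_order all_algebra.
From mathcomp Require Import all_classical all_reals all_analysis.
From mathcomp Require Import all_boot all_order all_algebra.
From mathcomp Require Import ring lra zify.
Import Order.TTheory GRing.Theory Num.Theory.
Import numFieldNormedType.Exports.
Local Open Scope ring_scope.

Lemma alt_binom (R : numDomainType) (X m : nat) :
  \sum_(j < m.+1) (-1 : R)^+j * 'C(X, j)%:R =
  if X is X'.+1 then (-1)^+m * 'C(X', m)%:R else 1.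
Proof.
elim: m => [|m IH]; first by case: X => [|X]; rewrite big_ord1 /= ?bin0 ?expr0 ?mul1r.
rewrite big_ord_recr /= IH; case: X {IH} => [|X]; first by rewrite bin0n mulr0 addr0.
by rewrite binS natrD exprS; ring.
Qed.

Lemma alt_binom_sign (R : realDomainType) (X m : nat) :
  let f := \sum_(j < m.+1) (-1 : R)^+j * 'C(X, j)%:R in
  let e : R := if X == 0%N then 1 else 0 in
  if odd m then f <= e else e <= f.
Proof.
rewrite /= alt_binom; case: X => [|X] /=; first by case: (odd m).
rewrite -signr_odd; case: (odd m); rewrite ?expr1 ?expr0 ?mulN1r ?mul1r.
  by rewrite oppr_le0 ler0n.
by rewrite ler0n.
Qed.

Lemma double_count (A B : finType) (X : {set A}) (Y : {set B}) (rel : A -> B -> bool) :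
  (\sum_(a in X) #|[set b in Y | rel a b]| = \sum_(b in Y) #|[set a in X | rel a b]|)%N.
Proof.
have E1 a : #|[set b in Y | rel a b]| = (\sum_(b in Y) (rel a b : nat))%N.
  rewrite -sum1_card big_mkcond [RHS]big_mkcond /=; apply: eq_bigr => b _.
  by rewrite !inE; case: (b \in Y); case: (rel a b).
have E2 b : #|[set a in X | rel a b]| = (\sum_(a in X) (rel a b : nat))%N.
  rewrite -sum1_card big_mkcond [RHS]big_mkcond /=; apply: eq_bigr => a _.
  by rewrite !inE; case: (a \in X); case: (rel a b).
under eq_bigr do rewrite E1.
under [RHS]eq_bigr do rewrite E2.
exact: exchange_big.
Qed.

Section Comb.
Variables (n r s k : nat).
Local Notation sset := {set 'I_n}.

Definition sS : {set sset} := [set S : sset | #|S| == s].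
Definition rR : {set sset} := [set h : sset | #|h| == r].
Definition RF (F : {set sset}) : {set sset} :=
  [set h in rR | [forall S in F, ~~ (S \subset h)]].
Definition unc (H : {ffun 'I_k -> sset}) : {set sset} :=
  [set S in sS | [forall t, ~~ (S \subset H t)]].
Definition Vh : {set {ffun 'I_k -> sset}} := [set H | valid_history r H].
Definition Fam (j : nat) : {set {set sset}} := [set F : {set sset} | F \subset sS & #|F| == j].

Lemma collected_unc H : all_collected s H = (#|unc H| == 0%N).
Proof.
rewrite cards_eq0.
apply/forallP/eqP => [Hall | U0 S].
  apply/setP => S; rewrite !inE; have := Hall S.
  case: (#|S| == s) => //= /existsP [t Ht]; apply/negbTE; rewrite negb_forall.
  by apply/existsP; exists t; rewrite Ht.
apply/implyP => HS; have : S \notin unc H by rewrite U0 in_set0.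
rewrite !inE HS /= negb_forall => /existsP [t]; rewrite negbK => Ht.
by apply/existsP; exists t.
Qed.

Lemma card_hist (F : {set sset}) : F \subset sS ->
  #|[set H in Vh | F \subset unc H]| = (#|RF F| ^ k)%N.
Proof.
move=> FS; rewrite -[k in RHS]card_ord -card_ffun_on; apply: eq_card => H.
rewrite !inE; apply/andP/ffun_onP => [[/forallP V /subsetP FU] t | HR].
  rewrite !inE V /=; apply/forall_inP => S SF.
  by have := FU S SF; rewrite inE => /andP [_ /forallP].
split; first by apply/forallP => t; have := HR t; rewrite !inE => /andP [].
apply/subsetP => S SF; rewrite inE (subsetP FS S SF) /=; apply/forallP => t.
by have := HR t; rewrite inE => /andP [_ /forall_inP]; apply.
Qed.

Lemma count_unc j H :
  #|[set F in Fam j | F \subset unc H]| = 'C(#|unc H|, j).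
Proof.
rewrite -cards_draws; apply: eq_card => F; rewrite !inE.
case FU: (F \subset unc H); rewrite ?andbF ?andbT //=.
suff -> : F \subset sS by [].
apply: (subset_trans FU); apply/subsetP => S; rewrite inE => /andP [].
by [].
Qed.


Definition Sj (R : realType) (j : nat) : R :=
  \sum_(F in Fam j) (#|RF F|%:R / #|rR|%:R) ^+ k.

Lemma bonf_key (R : realType) m : (0 < #|rR|)%N ->
  (\sum_(j < m.+1) (-1)^+j * Sj R j) * (#|rR| ^ k)%:R =
  \sum_(H in Vh) \sum_(j < m.+1) (-1 : R)^+j * 'C(#|unc H|, j)%:R.
Proof.
move=> R0; rewrite mulr_suml [RHS]exchange_big /=; apply: eq_bigr => j _.
rewrite -mulr_sumr -mulrA; congr (_ * _).
rewrite /Sj mulr_suml.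
transitivity ((\sum_(F in Fam j) #|[set H in Vh | F \subset unc H]|)%N%:R : R).
  rewrite natr_sum; apply: eq_bigr => F; rewrite inE => /andP [FS _].
  rewrite card_hist // natrX expr_div_n natrX mulfVK //.
  by rewrite expf_neq0 // pnatr_eq0 -lt0n.
rewrite -double_count natr_sum; apply: eq_bigr => H _.
by rewrite count_unc.
Qed.

Definition Pc (R : realType) : R :=
  #|[set H : {ffun 'I_k -> sset} | valid_history r H && all_collected s H]|%:R / (#|rR| ^ k)%:R.
Definition Bs (R : realType) m : R := \sum_(j < m.+1) (-1)^+j * Sj R j.

Lemma bonf (R : realType) m : (0 < #|rR|)%N ->
  if odd m then Bs R m <= Pc R else Pc R <= Bs R m.
Proof.
move=> R0; set P := Pc R; set B := Bs R m.
have Rk : (0 : R) < (#|rR| ^ k)%:R by rewrite ltr0n expn_gt0 R0.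
have EP : P * (#|rR| ^ k)%:R = \sum_(H in Vh) (if #|unc H| == 0%N then 1 else 0 : R).
  rewrite /P mulfVK ?gt_eqF // -sum1_card natr_sum big_mkcond [RHS]big_mkcond /=.
  apply: eq_bigr => H _; rewrite !inE collected_unc.
  by case: (valid_history r H); case: (#|unc H| == 0%N).
have EB := bonf_key R m R0; rewrite -/B in EB.
have := fun H => alt_binom_sign R #|unc H| m.
case: (odd m) => /= hs.
  rewrite -(ler_pM2r Rk) EP EB; apply: ler_sum => H _; exact: hs.
rewrite -(ler_pM2r Rk) EP EB; apply: ler_sum => H _; exact: hs.
Qed.


Lemma card_sup (T : sset) : (#|T| <= r)%N ->
  #|[set h in rR | T \subset h]| = 'C(n - #|T|, r - #|T|).
Proof.
move=> Tr.
pose D := [set g : sset | g \subset ~: T & #|g| == (r - #|T|)%N].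
have disj (g : sset) : g \subset ~: T -> g :&: T = set0.
  move=> gs; apply/setP => x; rewrite !inE; have := subsetP gs x; rewrite !inE.
  by case: (x \in g); case: (x \in T) => //= /(_ isT).
have -> : [set h in rR | T \subset h] = [set g :|: T | g in D].
  apply/setP => h; rewrite !inE; apply/andP/imsetP => [[hr Th]|[g]].
    exists (h :\: T); last first.
      apply/setP => x; rewrite !inE; have := subsetP Th x.
      by case: (x \in T); case: (x \in h) => // /(_ isT).
    rewrite inE subsetDr cardsD (setIidPr Th) (eqP hr) /=.
    by [].
  rewrite inE => /andP [gs /eqP gc] ->; split; last exact: subsetUr.
  by rewrite cardsU disj // cards0 subn0 gc subnK.
rewrite card_in_imset.
  by rewrite cards_draws; congr 'C(_, _); by rewrite (cardsCs (~: T)) setCK card_ord.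
move=> g1 g2; rewrite !inE => /andP [s1 _] /andP [s2 _] E; apply/setP => x.
have h1 := subsetP s1 x; have h2 := subsetP s2 x; move/setP: E => /(_ x).
rewrite !inE in h1 h2 *.
by case: (x \in T) h1 h2; case: (x \in g1); case: (x \in g2) => //= /(_ isT).
Qed.


Lemma card_rR : #|rR| = 'C(n, r).
Proof. by rewrite /rR card_draws card_ord. Qed.

Lemma card_sS : #|sS| = 'C(n, s).
Proof. by rewrite /sS card_draws card_ord. Qed.

Lemma p_ident : (s <= r)%N -> (#|rR| * 'C(r, s) = #|sS| * 'C(n - s, r - s))%N.
Proof.
move=> sr; have := double_count _ _ rR sS (fun h S => S \subset h).
have E1 : (\sum_(h in rR) #|[set S in sS | S \subset h]| = \sum_(h in rR) 'C(r, s))%N.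
  apply: eq_bigr => h; rewrite inE => /eqP hr; rewrite -hr -cards_draws.
  by apply: eq_card => S; rewrite !inE andbC.
have E2 : (\sum_(S in sS) #|[set h in rR | S \subset h]| = \sum_(S in sS) 'C(n - s, r - s))%N.
  by apply: eq_bigr => S; rewrite inE => /eqP Ss; rewrite card_sup Ss.
by rewrite E1 E2 !sum_nat_const.
Qed.

Lemma pair_bound (S S' : sset) : S \in sS -> S' \in sS -> S != S' ->
  ((n - s) * #|[set h in rR | S \subset h & S' \subset h]| <= (r - s) * 'C(n - s, r - s))%N.
Proof.
rewrite !inE => /eqP Ss /eqP S's neq.
have [a aS' aS] : exists2 a, a \in S' & a \notin S.
  case: (boolP (S' \subset S)) => sub; last by move/subsetPn: sub.
  exfalso; have : S' == S by rewrite eqEcard sub Ss S's leqnn.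
  by rewrite eq_sym (negbTE neq).
set T := a |: S.
have Tc : #|T| = s.+1 by rewrite cardsU1 aS Ss.
have sub : [set h in rR | S \subset h & S' \subset h] \subset [set h in rR | T \subset h].
  apply/subsetP => h; rewrite !inE => /and3P [hr Sh S'h]; rewrite hr /=.
  by rewrite subUset sub1set Sh (subsetP S'h a aS').
apply: leq_trans (leq_mul (leqnn _) (subset_leq_card sub)) _.
case: (ltnP s r) => sr.
  rewrite card_sup Tc // !subnS mul_bin_diag prednK //.
  by rewrite subn_gt0.
have -> : #|[set h in rR | T \subset h]| = 0%N.
  apply/eqP; rewrite cards_eq0; apply/eqP/setP => h; rewrite !inE.
  apply/negbTE/andP => [[/eqP hr Th]]; have := subset_leq_card Th.
  rewrite Tc hr; lia.
by rewrite muln0.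
Qed.


Lemma card_sep (X : {set sset}) (P : pred sset) :
  #|[set a in X | P a]| = (\sum_(a in X) (P a : nat))%N.
Proof.
rewrite -sum1_card big_mkcond [RHS]big_mkcond /=; apply: eq_bigr => a _.
by rewrite !inE; case: (a \in X); case: (P a).
Qed.

Definition cnt (F : {set sset}) (h : sset) : nat := (\sum_(S in F) (S \subset h : nat))%N.

Lemma RF_part (F : {set sset}) : (#|RF F| + \sum_(h in rR) (h \notin RF F : nat))%N = #|rR|.
Proof.
have -> : #|RF F| = (\sum_(h in rR) (h \in RF F : nat))%N.
  rewrite -sum1_card big_mkcond [RHS]big_mkcond /=; apply: eq_bigr => h _.
  by rewrite /RF !inE; case: (#|h| == r); case: [forall S in F, ~~ (S \subset h)].
rewrite -big_split /= -sum1_card; apply: eq_bigr => h _.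
by case: (h \in RF F).
Qed.

Lemma notRF_cnt (F : {set sset}) h : h \in rR -> (h \notin RF F) = (0 < cnt F h)%N.
Proof.
move=> hr; rewrite /RF inE hr /= lt0n /cnt sum_nat_eq0; congr (~~ _).
by apply: eq_forallb => S; case: (S \in F); case: (S \subset h).
Qed.

Lemma sum_cnt (F : {set sset}) : F \subset sS -> (s <= r)%N ->
  (\sum_(h in rR) cnt F h = #|F| * 'C(n - s, r - s))%N.
Proof.
move=> FS sr; rewrite /cnt exchange_big /= -sum_nat_const; apply: eq_bigr => S SF.
rewrite -card_sep card_sup; have := subsetP FS S SF; rewrite inE => /eqP -> //.
Qed.

Lemma sum_cnt2 (F : {set sset}) :
  (\sum_(h in rR) cnt F h * cnt F h =
   \sum_(S in F) \sum_(S' in F) #|[set h in rR | S \subset h & S' \subset h]|)%N.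
Proof.
transitivity (\sum_(h in rR) \sum_(S in F) \sum_(S' in F) ((S \subset h : nat) * (S' \subset h : nat)))%N.
  apply: eq_bigr => h _; rewrite /cnt big_distrl /=; apply: eq_bigr => S _.
  by rewrite big_distrr.
rewrite exchange_big /=; apply: eq_bigr => S _; rewrite exchange_big /=.
apply: eq_bigr => S' _; rewrite card_sep; apply: eq_bigr => h _.
by case: (S \subset h); case: (S' \subset h).
Qed.

Lemma pair_sum (F : {set sset}) S : F \subset sS -> S \in F -> (s <= r)%N ->
  ((n - s) * \sum_(S' in F) #|[set h in rR | S \subset h & S' \subset h]| <=
   (n - s) * 'C(n - s, r - s) + #|F| * ((r - s) * 'C(n - s, r - s)))%N.
Proof.
move=> FS SF sr; rewrite (bigD1 S) //= mulnDr.
have SS : S \in sS by exact: (subsetP FS).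
apply: leq_add.
  move: SS; rewrite inE => /eqP Ss.
  have -> : 'C(n - s, r - s) = #|[set h in rR | S \subset h]| by rewrite card_sup Ss.
  by apply: leq_mul => //; apply: subset_leq_card; apply/subsetP => h; rewrite !inE => /and3P [-> ->].
rewrite big_distrr /= -sum_nat_const.
apply: (@leq_trans (\sum_(S' | (S' \in F) && (S' != S)) ((r - s) * 'C(n - s, r - s)))%N).
  apply: leq_sum => S' /andP [S'F neq]; apply: pair_bound => //.
  - exact: (subsetP FS).
  - by rewrite eq_sym.
apply: (@sub_le_big _ addn leq) => //; first by move=> x y; exact: leq_addr.
by move=> S' /andP [].
Qed.


Lemma qF_nat (F : {set sset}) : F \subset sS -> (s <= r)%N ->
  let u := (\sum_(h in rR) (h \notin RF F : nat))%N in
  let c1 := (\sum_(h in rR) cnt F h)%N in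
  let c2 := (\sum_(h in rR) cnt F h * cnt F h)%N in
  [/\ (#|RF F| + u = #|rR|)%N, (u <= c1)%N, (3 * c1 <= 2 * u + c2)%N,
      c1 = (#|F| * 'C(n - s, r - s))%N &
      ((n - s) * c2 <= #|F| * ((n - s) * 'C(n - s, r - s) + #|F| * ((r - s) * 'C(n - s, r - s))))%N].
Proof.
move=> FS sr u c1 c2; split.
- exact: RF_part.
- apply: leq_sum => h hr; rewrite notRF_cnt //; by case: (cnt F h).
- rewrite /c1 /u /c2 !big_distrr /= -big_split /=; apply: leq_sum => h hr.
  rewrite notRF_cnt //; case: (cnt F h) => [|c] //=; nia.
- exact: sum_cnt.
- rewrite /c2 sum_cnt2 big_distrr /= -sum_nat_const; apply: leq_sum => S SF.
  exact: pair_sum.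
Qed.

Lemma qF_bounds (R : realType) (F : {set sset}) : F \subset sS -> (s <= r)%N -> (s < n)%N ->
  (0 < #|rR|)%N ->
  (1 - #|F|%:R * ('C(n - s, r - s)%:R / #|rR|%:R) <= #|RF F|%:R / #|rR|%:R :> R) /\
  (#|RF F|%:R / #|rR|%:R <= 1 - #|F|%:R * ('C(n - s, r - s)%:R / #|rR|%:R) *
     (1 - #|F|%:R * ((r - s)%:R / (n - s)%:R)) :> R).
Proof.
move=> FS sr sn R0.
have [E1 E2 E3 E4 E5] := qF_nat F FS sr.
set u := (\sum_(h in rR) _)%N in E1 E2 E3.
set c1 := (\sum_(h in rR) cnt F h)%N in E2 E3 E4.
set c2 := (\sum_(h in rR) _)%N in E3 E5.
have Rn0 : (0 : R) < #|rR|%:R by rewrite ltr0n.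
have ns0 : (0 : R) < (n - s)%:R by rewrite ltr0n subn_gt0.
set Rn : R := #|rR|%:R in Rn0 *.
set D : R := 'C(n - s, r - s)%:R.
set j : R := #|F|%:R.
set del : R := (r - s)%:R / (n - s)%:R.
have eRF : (#|RF F|%:R : R) = Rn - u%:R by rewrite /Rn -E1 natrD addrK.
have e2 : (u%:R : R) <= j * D by rewrite /j /D -natrM -E4 ler_nat.
have e3 : 3 * (j * D) <= 2 * u%:R + c2%:R :> R.
  have := E3; rewrite E4 -(ler_nat R) !natrD !natrM => h.
  by rewrite /j /D; lra.
have e5 : c2%:R <= j * D + j * j * del * D :> R.
  have := E5; rewrite -(ler_nat R) !(natrD, natrM) => h.
  have h2 : c2%:R <= (#|F|%:R * ((n - s)%:R * D + #|F|%:R * ((r - s)%:R * D))) / (n - s)%:R :> R.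
    by rewrite ler_pdivlMr // mulrC.
  apply: (le_trans h2); rewrite le_eqVlt; apply/orP; left; apply/eqP.
  by rewrite /j /del; field; rewrite gt_eqF.
have t0 : 0 <= j * j * del * D by rewrite /j /del /D; apply: mulr_ge0 => //; apply: mulr_ge0 => //; apply: mulr_ge0 => //; apply: divr_ge0.
split.
  rewrite ler_pdivlMr // eRF.
  have -> : (1 - j * (D / Rn)) * Rn = Rn - j * D by field; rewrite gt_eqF.
  lra.
rewrite ler_pdivrMr // eRF.
have -> : (1 - j * (D / Rn) * (1 - j * del)) * Rn = Rn - j * D + j * j * del * D.
  by field; rewrite gt_eqF.
lra.
Qed.

End Comb.

Local Open Scope classical_set_scope.
Local Open Scope ring_scope.

Section An.
Variable R : realType.

Lemma ln_le_eps (e : R) : 0 < e -> exists M : R, 1 <= M /\ forall z, M <= z -> ln z <= e * z.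
Proof.
move=> e0; exists (Num.max 1 (2 / (e * e))); split; first by rewrite le_max lexx.
move=> z; rewrite ge_max => /andP [z1 ze].
have z0 : 0 < z by lra.
have l0 : 0 <= ln z by apply: ln_ge0.
have := @expR_ge1Dxn R (ln z) 1 l0; rewrite lnK ?posrE // => hz.
have hz2 : ln z ^+ 2 <= 2 * z.
  move: hz; rewrite (_ : (2%N`!)%:R = 2 :> R) //; lra.
have ze2 : 2 <= e * e * z by move: ze; rewrite ler_pdivrMr ?mulr_gt0 // mulrC.
rewrite leNgt; apply/negP => lt.
have : (e * z) ^+ 2 < ln z ^+ 2.
  rewrite ltr_pXn2r // ?nnegrE //; apply: mulr_ge0; lra.
nra.
Qed.

Lemma ln_over_cvg (a : nat -> R) :
  (forall M : R, \forall n \near \oo, M <= a n) ->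
  (fun n => ln (a n) / a n) @ \oo --> 0.
Proof.
move=> Ha; apply/cvgrPdist_lt => e e0.
have [M [M1 HM]] := ln_le_eps (e / 2) (divr_gt0 e0 (ltr0Sn R 1)).
near=> n.
have an : M <= a n by near: n; exact: Ha.
have a0 : 0 < a n by lra.
rewrite sub0r normrN ger0_norm; last by apply: divr_ge0; [apply: ln_ge0|]; lra.
rewrite ltr_pdivrMr //; have := HM _ an; nra.
Unshelve. all: by end_near.
Qed.

Lemma bern (a : R) (j : nat) : 0 <= a <= 1 -> 1 - j%:R * a <= (1 - a) ^+ j.
Proof.
move=> /andP [a0 a1]; elim: j => [|j IH]; first by rewrite mul0r subr0 expr0.
rewrite exprSr -natr1.
have h : (1 - j%:R * a) * (1 - a) <= (1 - a) ^+ j * (1 - a).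
  by apply: ler_wpM2r; lra.
have : 0 <= j%:R * a * a by apply: mulr_ge0 => //; apply: mulr_ge0.
nra.
Qed.

Lemma ffact_ge (N j : nat) : ((N - j) ^ j <= N ^_ j)%N.
Proof.
elim: j N => [|j IH] N //=; rewrite ffactnS expnS.
apply: leq_mul; first by lia.
have -> : (N - j.+1 = N.-1 - j)%N by lia.
exact: IH.
Qed.

Lemma ffact_le (N j : nat) : (N ^_ j <= N ^ j)%N.
Proof.
elim: j N => [|j IH] N //; rewrite ffactnS expnS leq_mul //.
apply: leq_trans (IH N.-1) _; case: j {IH} => [|j] //; rewrite leq_exp2r //; lia.
Qed.

Lemma inv_cvg0 (a : nat -> R) :
  (forall M : R, \forall n \near \oo, M <= a n) ->
  (fun n => (a n)^-1) @ \oo --> 0.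
Proof.
move=> Ha; apply/cvgrPdist_lt => e e0.
near=> n.
have an : 2 / e <= a n by near: n; exact: Ha.
have a0 : 0 < a n by apply: lt_le_trans an; apply: divr_gt0.
rewrite sub0r normrN ger0_norm; last by rewrite invr_ge0 ltW.
rewrite -(ltr_pM2r a0) mulVf ?gt_eqF //.
move: an; rewrite ler_pdivrMr // => h; lra.
Unshelve. all: by end_near.
Qed.

Lemma binj_cvg (Nn : nat -> nat) (j : nat) :
  (forall M : R, \forall n \near \oo, M <= (Nn n)%:R) ->
  (fun n => 'C(Nn n, j)%:R / (Nn n)%:R ^+ j) @ \oo --> ((j`!%:R)^-1 : R).
Proof.
move=> HN.
have hinv := inv_cvg0 _ HN.
have h1 : (fun n => 1 - j%:R * (j%:R * ((Nn n)%:R)^-1)) @ \oo --> (1 - j%:R * (j%:R * 0) : R).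
  apply: cvgB; first exact: cvg_cst.
  apply: cvgM; first exact: cvg_cst.
  apply: cvgM; first exact: cvg_cst.
  exact: hinv.
have lo : (fun n => (1 - j%:R * (j%:R / (Nn n)%:R)) * (j`!%:R)^-1) @ \oo --> ((1 - j%:R * (j%:R * 0)) * (j`!%:R)^-1 : R).
  by apply: cvgM => //; exact: cvg_cst.
rewrite !mulr0 subr0 mul1r in lo.
apply: (squeeze_cvgr _ lo (cvg_cst _)).
near=> n; rewrite /=.
have Nj : (j%:R : R) <= (Nn n)%:R by near: n; exact: HN.
have N1 : (1 : R) <= (Nn n)%:R by near: n; exact: HN.
have N0 : (0 : R) < (Nn n)%:R by lra.
have jN : (j <= Nn n)%N by rewrite -(ler_nat R).
have f0 : (0 : R) < j`!%:R by rewrite ltr0n fact_gt0.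
have eC : ('C(Nn n, j)%:R : R) = (Nn n ^_ j)%:R / j`!%:R.
  by rewrite -bin_ffact natrM mulfK ?gt_eqF.
rewrite eC mulrAC; apply/andP; split; rewrite ?ler_pM2r ?invr_gt0 //.
  apply: le_trans (_ : (1 - j%:R / (Nn n)%:R) ^+ j <= _).
    apply: bern; apply/andP; split; first by apply: divr_ge0.
    by rewrite ler_pdivrMr // mul1r.
  rewrite ler_pdivlMr ?exprn_gt0 //.
  have e1 : ((1 - j%:R / (Nn n)%:R) * (Nn n)%:R) ^+ j = ((Nn n)%:R - j%:R) ^+ j :> R.
    by congr (_ ^+ _); field; rewrite gt_eqF.
  rewrite exprMn in e1; rewrite e1.
  by rewrite -natrB // -natrX ler_nat ffact_ge.
rewrite -[X in _ <= X]mul1r ler_pM2r ?invr_gt0 //.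
by rewrite ler_pdivrMr ?exprn_gt0 // mul1r -natrX ler_nat ffact_le.
Unshelve. all: by end_near.
Qed.


Lemma ln1B_bounds (y : R) : 0 <= y <= 1/2 ->
  - (y / (1 - y)) <= ln (1 - y) <= - y.
Proof.
move=> /andP [y0 y1]; apply/andP; split; last first.
  by rewrite -[1 - y]/(1 + - y) le_ln1Dx //; lra.
have q0 : 0 < 1 - y by lra.
have e : (1 - y)^-1 = 1 + y / (1 - y) by field; rewrite gt_eqF.
have := @le_ln1Dx R (y / (1 - y)); rewrite -e lnV ?posrE // => h.
have : -1 < y / (1 - y) by apply: lt_le_trans (_ : -1 < 0) _; [lra|apply: divr_ge0; lra].
move/h; lra.
Qed.

Lemma exponent_bounds (lN x p K eps y : R) (j : nat) :
  0 < p -> 0 <= lN + x -> 0 <= eps <= 1 -> j%:R * p <= 1/2 -> 0 <= K ->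
  (lN + x) / p - 1 <= K <= (lN + x) / p -> y = j%:R * p * (1 - eps) ->
  `| j%:R * lN + K * ln (1 - y) - j%:R * (- x) | <=
    j%:R * (lN + x) * eps + j%:R * p + 2 * j%:R * j%:R * (lN + x) * p.
Proof.
move=> p0 L0 /andP [e0 e1] jp K0 /andP [K1 K2] ey.
set J : R := j%:R in jp ey *.
have J0 : 0 <= J by rewrite /J ler0n.
have Jp0 : 0 <= J * p by apply: mulr_ge0 => //; lra.
have y0 : 0 <= y by rewrite ey; apply: mulr_ge0 => //; lra.
have yJp : y <= J * p by rewrite ey; nra.
have y1 : y <= 1/2 by lra.
have [la lb] : - (y / (1 - y)) <= ln (1 - y) /\ ln (1 - y) <= - y.
  by apply/andP; apply: ln1B_bounds; lra.
set a := ln (1 - y) in la lb *.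
set Q := (lN + x) / p in K1 K2 *.
have Lp0 : 0 <= Q by apply: divr_ge0 => //; lra.
have eyL : Q * y = J * (lN + x) * (1 - eps) by rewrite ey /Q; field; rewrite gt_eqF.
have up : K * a <= - Q * y + y.
  have : K * a <= K * (- y) by apply: ler_wpM2l.
  have : (Q - 1) * y <= K * y by apply: ler_wpM2r.
  lra.
have q0 : 0 < 1 - y by lra.
set iq := (1 - y)^-1.
have iq0 : 0 <= iq by rewrite /iq invr_ge0; lra.
have iq1 : iq <= 1 + 2 * y.
  by rewrite /iq -div1r ler_pdivrMr //; nra.
have lo : - (J * (lN + x)) * (1 + 2 * y) <= K * a.
  have h1 : (Q - K) * a <= 0 by apply: mulr_ge0_le0; lra.
  have h2 : Q * (- (y / (1 - y))) <= Q * a by apply: ler_wpM2l.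
  have h3 : Q * (y / (1 - y)) = J * (lN + x) * (1 - eps) * iq.
    by rewrite mulrA eyL.
  have h4 : (1 - eps) * iq <= 1 + 2 * y.
    have : (1 - eps) * iq <= 1 * iq by apply: ler_wpM2r => //; lra.
    lra.
  have JL0 : 0 <= J * (lN + x) by apply: mulr_ge0.
  have h5 : J * (lN + x) * ((1 - eps) * iq) <= J * (lN + x) * (1 + 2 * y).
    by apply: ler_wpM2l.
  rewrite mulrA in h5.
  have h6 : Q * (- (y / (1 - y))) = - (Q * (y / (1 - y))) by rewrite mulrN.
  lra.
have JLe : 0 <= J * (lN + x) * eps by apply: mulr_ge0 => //; apply: mulr_ge0.
have JLJp : J * (lN + x) * y <= J * (lN + x) * (J * p).
  by apply: ler_wpM2l => //; apply: mulr_ge0.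
rewrite ler_norml; apply/andP; split.
  have : 0 <= J * (lN + x) * y by apply: mulr_ge0 => //; apply: mulr_ge0.
  nra.
nra.
Qed.


Lemma AL (Nn : nat -> nat) (c x : R) (j : nat) (k : nat -> nat) (eps : nat -> R) :
  0 < c ->
  (forall M : R, \forall n \near \oo, M <= (Nn n)%:R) ->
  (\forall n \near \oo, (ln (Nn n)%:R + x) / (c / (Nn n)%:R) - 1 <= (k n)%:R <=
                         (ln (Nn n)%:R + x) / (c / (Nn n)%:R)) ->
  (\forall n \near \oo, 0 <= eps n) ->
  eps @ \oo --> 0 ->
  (fun n => eps n * ln (Nn n)%:R) @ \oo --> 0 ->
  (fun n => 'C(Nn n, j)%:R * (1 - j%:R * (c / (Nn n)%:R) * (1 - eps n)) ^+ k n)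
     @ \oo --> expR (- x) ^+ j / j`!%:R.
Proof.
move=> c0 HN Hk He0 He Hel.
have hA := binj_cvg Nn j HN.
have hinv := inv_cvg0 _ HN.
have hlnN := ln_over_cvg _ HN.
have hp : (fun n => c / (Nn n)%:R) @ \oo --> (c * 0 : R).
  by apply: cvgM => //; exact: cvg_cst.
rewrite mulr0 in hp.
have hLp : (fun n => (ln (Nn n)%:R + x) * (c / (Nn n)%:R)) @ \oo --> (c * 0 + x * 0 : R).
  rewrite (_ : (fun n => _) = (fun n => c * (ln (Nn n)%:R / (Nn n)%:R) + x * (c / (Nn n)%:R))); last first.
    by apply/funext => n; ring.
  apply: cvgD; apply: cvgM => //; exact: cvg_cst.
rewrite mulr0 mulr0 addr0 in hLp.
have hLe : (fun n => (ln (Nn n)%:R + x) * eps n) @ \oo --> (0 + x * 0 : R).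
  rewrite (_ : (fun n => _) = (fun n => eps n * ln (Nn n)%:R + x * eps n)); last first.
    by apply/funext => n; ring.
  apply: cvgD => //; apply: cvgM => //; exact: cvg_cst.
rewrite mulr0 addr0 in hLe.
set J : R := j%:R.
pose b n := J * ((ln (Nn n)%:R + x) * eps n) + J * (c / (Nn n)%:R) +
            2 * J * J * ((ln (Nn n)%:R + x) * (c / (Nn n)%:R)).
have hb : b @ \oo --> (J * 0 + J * 0 + 2 * J * J * 0 : R).
  apply: cvgD; first apply: cvgD.
  - by apply: cvgM => //; exact: cvg_cst.
  - by apply: cvgM => //; exact: cvg_cst.
  - by apply: cvgM => //; exact: cvg_cst.
rewrite !mulr0 !addr0 in hb.
pose e n := J * ln (Nn n)%:R + (k n)%:R * ln (1 - J * (c / (Nn n)%:R) * (1 - eps n)).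
have hlo : (fun n => J * (- x) - b n) @ \oo --> (J * (- x) - 0 : R).
  by apply: cvgB => //; exact: cvg_cst.
have hhi : (fun n => J * (- x) + b n) @ \oo --> (J * (- x) + 0 : R).
  by apply: cvgD => //; exact: cvg_cst.
rewrite subr0 in hlo; rewrite addr0 in hhi.
have hbound : \forall n \near \oo, `| e n - J * (- x) | <= b n.
  near=> n.
  have N1 : (1 : R) <= (Nn n)%:R by near: n; exact: HN.
  have Nx : expR (- x) <= (Nn n)%:R by near: n; exact: HN.
  have N0 : (0 : R) < (Nn n)%:R by lra.
  have L0 : 0 <= ln (Nn n)%:R + x.
    have : ln (expR (- x)) <= ln (Nn n)%:R by rewrite ler_ln ?posrE ?expR_gt0.
    rewrite expRK; lra.
  have e0 : 0 <= eps n by near: n; exact: He0.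
  have e1 : eps n <= 1.
    near: n; move/cvgrPdist_le: He => /(_ 1 ltr01); apply: filterS => m.
    by rewrite sub0r normrN ler_norml => /andP [].
  have jp : J * (c / (Nn n)%:R) <= 1/2.
    near: n; move/cvgrPdist_le: hp => /(_ (1 / 2 / (J + 1))).
    have J0 : 0 <= J by rewrite ler0n.
    have : 0 < 1 / 2 / (J + 1) by apply: divr_gt0; lra.
    move=> h0 /(_ h0); apply: filterS => m; rewrite sub0r normrN => h.
    move: h; rewrite ler_norml => /andP [_ h1].
    have cN : 0 <= c / (Nn m)%:R by apply: divr_ge0; [lra | exact: ler0n].
    have J10 : 0 < J + 1 by lra.
    have h2 : (J + 1) * (c / (Nn m)%:R) <= (J + 1) * (1 / 2 / (J + 1)).
      by apply: ler_wpM2l; lra.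
    have h3 : (J + 1) * (1 / 2 / (J + 1)) = 1 / 2 by field; rewrite gt_eqF.
    nra.
  have [K1 K2] : (ln (Nn n)%:R + x) / (c / (Nn n)%:R) - 1 <= (k n)%:R /\
                 (k n)%:R <= (ln (Nn n)%:R + x) / (c / (Nn n)%:R).
    by apply/andP; near: n; exact: Hk.
  have := @exponent_bounds (ln (Nn n)%:R) x (c / (Nn n)%:R) (k n)%:R (eps n)
     (J * (c / (Nn n)%:R) * (1 - eps n)) j (divr_gt0 c0 N0) L0.
  rewrite e0 e1 jp ler0n K1 K2 => /(_ isT isT isT isT erefl).
  move=> H; apply: (le_trans H); rewrite /b /J le_eqVlt; apply/orP; left; apply/eqP; ring.
have he : e @ \oo --> J * (- x).
  apply: (squeeze_cvgr _ hlo hhi); near=> n.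
  have hb' : `| e n - J * (- x) | <= b n by near: n; exact: hbound.
  by move: hb'; rewrite ler_norml => /andP [h1 h2]; apply/andP; split; lra.
have hE : (expR \o e) @ \oo --> expR (J * (- x)) by apply: continuous_cvg => //; exact: continuous_expR.
have hprod : (fun n => 'C(Nn n, j)%:R / (Nn n)%:R ^+ j * expR (e n)) @ \oo --> (j`!%:R^-1 * expR (J * (- x)) : R).
  by apply: cvgM.
rewrite (_ : expR (- x) ^+ j / j`!%:R = j`!%:R^-1 * expR (J * (- x))); last first.
  by rewrite /J expRM_natl mulrC.
apply: (squeeze_cvgr _ hprod hprod); near=> n.
have N1 : (1 : R) <= (Nn n)%:R by near: n; exact: HN.
have N0 : (0 : R) < (Nn n)%:R by lra.
have e0 : 0 <= eps n by near: n; exact: He0.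
have e1 : eps n <= 1.
  near: n; move/cvgrPdist_le: He => /(_ 1 ltr01); apply: filterS => m.
  by rewrite sub0r normrN ler_norml => /andP [].
have jp : J * (c / (Nn n)%:R) <= 1/2.
  near: n; move/cvgrPdist_le: hp => /(_ (1 / 2 / (J + 1))).
  have J0 : 0 <= J by rewrite ler0n.
  have : 0 < 1 / 2 / (J + 1) by apply: divr_gt0; lra.
  move=> h0 /(_ h0); apply: filterS => m; rewrite sub0r normrN => h.
  move: h; rewrite ler_norml => /andP [_ h1].
  have cN : 0 <= c / (Nn m)%:R by apply: divr_ge0; [lra | exact: ler0n].
  have J10 : 0 < J + 1 by lra.
  have h2 : (J + 1) * (c / (Nn m)%:R) <= (J + 1) * (1 / 2 / (J + 1)).
    by apply: ler_wpM2l; lra.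
  have h3 : (J + 1) * (1 / 2 / (J + 1)) = 1 / 2 by field; rewrite gt_eqF.
  nra.
have J0 : 0 <= J by rewrite ler0n.
have q0 : 0 < 1 - J * (c / (Nn n)%:R) * (1 - eps n).
  have : J * (c / (Nn n)%:R) * (1 - eps n) <= J * (c / (Nn n)%:R) * 1.
    apply: ler_wpM2l; last lra.
    by apply: mulr_ge0 => //; apply: divr_ge0; lra.
  lra.
have -> : expR (e n) = (Nn n)%:R ^+ j * (1 - J * (c / (Nn n)%:R) * (1 - eps n)) ^+ k n.
  by rewrite /e expRD /J !expRM_natl !lnK ?posrE.
rewrite /=; set Q := (_ ^+ k n).
by rewrite mulrA divfK ?expf_neq0 ?gt_eqF // lexx.
Unshelve. all: by end_near.
Qed.

End An.

Lemma bin_ge_lin s d : (0 < s)%N -> (d.+1 <= 'C(s + d, s))%N.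
Proof.
case: s => // s _; elim: d => [|d IH]; first by rewrite addn0 binn.
rewrite addnS binS -addn1 leq_add // bin_gt0; lia.
Qed.

Lemma bin_le_pow n s : ('C(n, s) <= n ^ s)%N.
Proof.
apply: leq_trans (_ : _ <= 'C(n, s) * s`!)%N _; first by rewrite leq_pmulr ?fact_gt0.
by rewrite bin_ffact ffact_le.
Qed.

Section Main.
Variables (R : realType) (r s : nat) (x : R).
Hypotheses (hs : (1 <= s)%N) (hsr : (s <= r)%N).

Let Nn (n : nat) : nat := 'C(n, s).
Let c : R := 'C(r, s)%:R.
Let kk (n : nat) : nat := Num.truncn (Defs.center R n r s + Defs.scale R n r s * x).

Lemma c_gt0 : 0 < c.
Proof. by rewrite /c ltr0n bin_gt0. Qed.

Lemma HN : forall M : R, \forall n \near \oo, M <= (Nn n)%:R.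
Proof.
move=> M; exists (s + Num.truncn M)%N => // n /= Hn.
have := bin_ge_lin s (n - s) hs; rewrite subnKC; last by lia.
rewrite -(ler_nat R) => h; apply: le_trans h.
have := truncnS_gt M; move=> h; apply: ltW; apply: lt_le_trans h _.
rewrite ler_nat ltnS; have := leq_sub2r s Hn; rewrite addKn; exact.
Qed.

Lemma Hk : \forall n \near \oo,
  (ln (Nn n)%:R + x) / (c / (Nn n)%:R) - 1 <= (kk n)%:R <=
  (ln (Nn n)%:R + x) / (c / (Nn n)%:R).
Proof.
near=> n.
have N1 : expR (- x) <= (Nn n)%:R by near: n; exact: HN.
have N0 : (0 : R) < (Nn n)%:R by apply: lt_le_trans N1; exact: expR_gt0.
have L0 : 0 <= ln (Nn n)%:R + x.
  have : ln (expR (- x)) <= ln (Nn n)%:R by rewrite ler_ln ?posrE ?expR_gt0.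
  rewrite expRK; lra.
have c0 := c_gt0.
have E : Defs.center R n r s + Defs.scale R n r s * x = (ln (Nn n)%:R + x) / (c / (Nn n)%:R).
  have cpos : (0 : R) < 'C(r, s)%:R := c_gt0.
  rewrite /Defs.center /Defs.scale /c /Nn; field; apply/andP; split; rewrite gt_eqF //.
have y0 : 0 <= (ln (Nn n)%:R + x) / (c / (Nn n)%:R) by apply: divr_ge0 => //; apply: divr_ge0; lra.
have := truncn_itv y0; rewrite /kk E => /andP [h1 h2]; apply/andP; split => //; lra.
Unshelve. all: by end_near.
Qed.


Lemma Hn_s : forall M : R, \forall n \near \oo, M <= (n - s)%:R.
Proof.
move=> M; exists (s + (Num.truncn M).+1)%N => // n /= Hn.
have := truncnS_gt M; move=> h; apply: ltW; apply: lt_le_trans h _.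
rewrite ler_nat; have := leq_sub2r s Hn; rewrite addKn; exact.
Qed.

Lemma Hn_id : forall M : R, \forall n \near \oo, M <= n%:R.
Proof.
move=> M; exists (Num.truncn M).+1 => // n /= Hn.
have := truncnS_gt M; move=> h; apply: ltW; apply: lt_le_trans h _.
by rewrite ler_nat.
Qed.

Lemma eps_cvg (j : nat) : (fun n => j%:R * ((r - s)%:R / (n - s)%:R)) @ \oo --> (0 : R).
Proof.
have h := inv_cvg0 R _ Hn_s.
have h2 : (fun n => j%:R * ((r - s)%:R / (n - s)%:R)) @ \oo --> (j%:R * ((r - s)%:R * 0) : R).
  apply: cvgM; first exact: cvg_cst.
  apply: cvgM; first exact: cvg_cst.
  exact: h.
by rewrite !mulr0 in h2.
Qed.

Lemma epsln_cvg (j : nat) :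
  (fun n => j%:R * ((r - s)%:R / (n - s)%:R) * ln (Nn n)%:R) @ \oo --> (0 : R).
Proof.
set A : R := j%:R * (r - s)%:R.
have A0 : 0 <= A by rewrite /A mulr_ge0 // ler0n.
have hl := ln_over_cvg R _ Hn_id.
have hu : (fun n => A * (2 * s%:R) * (ln n%:R / n%:R)) @ \oo --> (A * (2 * s%:R) * 0 : R).
  by apply: cvgM => //; exact: cvg_cst.
rewrite mulr0 in hu.
apply: (squeeze_cvgr _ (cvg_cst 0) hu).
near=> n.
have n1 : ((2 * s).+1%:R : R) <= n%:R by near: n; exact: Hn_id.
have sn : (2 * s < n)%N by rewrite -(ler_nat R).
have N1 : (1 : R) <= (Nn n)%:R by near: n; exact: HN.
have lN0 : 0 <= ln ((Nn n)%:R : R) by apply: ln_ge0.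
have n0 : (0 : R) < n%:R by rewrite ltr0n; lia.
have ns0 : (0 : R) < (n - s)%:R by rewrite ltr0n; lia.
have lNs : ln ((Nn n)%:R : R) <= s%:R * ln (n%:R : R).
  rewrite (_ : s%:R * ln (n%:R : R) = ln (n%:R ^+ s)); last by rewrite lnXn // mulr_natl.
  rewrite ler_ln ?posrE ?exprn_gt0 //; last lra.
  by rewrite -natrX ler_nat bin_le_pow.
have ln0 : 0 <= ln (n%:R : R) by apply: ln_ge0; rewrite ler1n; lia.
have inv2 : (n - s)%:R^-1 <= 2 * (n%:R : R)^-1.
  rewrite -div1r ler_pdivrMr // mulrAC ler_pdivlMr // mul1r natrB; last lia.
  have : (2 * s)%:R < (n%:R : R) by rewrite ltr_nat.
  rewrite natrM; lra.
have e : j%:R * ((r - s)%:R / (n - s)%:R) * ln (Nn n)%:R = A * ((n - s)%:R^-1 * ln (Nn n)%:R).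
  by rewrite /A; ring.
rewrite /= e; apply/andP; split.
  by apply: mulr_ge0 => //; apply: mulr_ge0 => //; rewrite invr_ge0 ltW.
have -> : A * (2 * s%:R) * (ln n%:R / n%:R) = A * ((2 * (n%:R)^-1) * (s%:R * ln n%:R)).
  by ring.
apply: ler_wpM2l => //; apply: ler_pM => //; rewrite ?invr_ge0 ?ltW //.
Unshelve. all: by end_near.
Qed.


Lemma pid n : (s < n)%N -> (r <= n)%N ->
  ('C(n - s, r - s)%:R / #|rR n r|%:R : R) = c / (Nn n)%:R.
Proof.
move=> sn rn.
have R0 : (0 < #|rR n r|)%N by rewrite card_rR bin_gt0.
have N0 : (0 < #|sS n s|)%N by rewrite card_sS bin_gt0; lia.
rewrite /Nn /c (_ : 'C(n, s) = #|sS n s|); last by rewrite card_sS.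
apply/eqP; rewrite eqr_div ?pnatr_eq0 -?lt0n //.
rewrite -!natrM; apply/eqP; congr (_%:R).
by rewrite mulnC -p_ident // mulnC.
Qed.

Lemma Sj_bounds (j : nat) : \forall n \near \oo,
  'C(Nn n, j)%:R * (1 - j%:R * (c / (Nn n)%:R) * (1 - 0)) ^+ kk n <= Sj n r s (kk n) R j <=
  'C(Nn n, j)%:R * (1 - j%:R * (c / (Nn n)%:R) * (1 - j%:R * ((r - s)%:R / (n - s)%:R))) ^+ kk n.
Proof.
have HN' := HN; have Hid := Hn_id; have hsr' := hsr.
near=> n.
have nr : ((r.+1)%:R : R) <= n%:R by near: n; exact: Hid.
have rn : (r < n)%N by rewrite -(ler_nat R).
have sn : (s < n)%N by lia.
have rn' : (r <= n)%N by lia.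
have Nj : j%:R * c + 1 <= (Nn n)%:R. near: n; exact: HN'.
have c0 := c_gt0.
have jc0 : 0 <= j%:R * c by apply: mulr_ge0; [exact: ler0n | lra].
have N0 : (0 : R) < (Nn n)%:R by lra.
have jp : 0 <= 1 - j%:R * (c / (Nn n)%:R).
  rewrite subr_ge0 mulrA ler_pdivrMr // mul1r; lra.
have R0 : (0 < #|rR n r|)%N by rewrite card_rR bin_gt0; lia.
have cardF : #|Fam n s j| = 'C(Nn n, j) by rewrite /Fam cards_draws card_sS.
have sc : forall a : R, #|Fam n s j|%:R * a = \sum_(F in Fam n s j) a.
  by move=> a; rewrite sumr_const mulr_natl.
rewrite /Sj -cardF !sc; apply/andP; split; apply: ler_sum => F;
  rewrite inE => /andP [FS /eqP Fj];
  have [qlo qhi] := qF_bounds n r s R F FS hsr' sn R0;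
  rewrite Fj pid // in qlo qhi.
  have q0 : (0 : R) <= #|RF n r F|%:R / #|rR n r|%:R by apply: divr_ge0; exact: ler0n.
  by apply: lerXn2r; rewrite ?nnegrE ?subr0 ?mulr1.
have q0 : (0 : R) <= #|RF n r F|%:R / #|rR n r|%:R by apply: divr_ge0; exact: ler0n.
apply: lerXn2r; rewrite ?nnegrE //.
exact: le_trans q0 qhi.
Unshelve. all: by end_near.
Qed.


Lemma Sj_cvg (j : nat) :
  (fun n => Sj n r s (kk n) R j) @ \oo --> expR (- x) ^+ j / j`!%:R.
Proof.
have HN' := HN; have Hk' := Hk; have c0 := c_gt0.
have z0 : \forall n \near \oo, (0 : R) <= (fun _ : nat => (0 : R)) n by apply: nearW => n.
have he0 : (fun _ : nat => (0 : R)) @ \oo --> (0 : R) by exact: cvg_cst.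
have lo := AL R Nn c x j kk (fun _ => 0) c0 HN' Hk' z0 he0.
have hl : (fun n => (fun _ : nat => (0 : R)) n * ln (Nn n)%:R) @ \oo --> (0 : R).
  rewrite (_ : (fun n => _) = fun _ => 0); first exact: cvg_cst.
  by apply/funext => n; rewrite mul0r.
have {hl}lo := lo hl.
have hi := AL R Nn c x j kk (fun n => j%:R * ((r - s)%:R / (n - s)%:R)) c0 HN' Hk'.
have z1 : \forall n \near \oo, (0 : R) <= j%:R * ((r - s)%:R / (n - s)%:R).
  by apply: nearW => n; apply: mulr_ge0 => //; apply: divr_ge0.
have {hi}hi := hi z1.
have {hi}hi := hi (eps_cvg j) (epsln_cvg j).
exact: (squeeze_cvgr (Sj_bounds j) lo hi).
Qed.


Lemma y_ge0 : \forall n \near \oo, 0 <= Defs.center R n r s + Defs.scale R n r s * x.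
Proof.
have HN' := HN.
near=> n.
have N1 : expR (- x) <= (Nn n)%:R by near: n; exact: HN'.
have N0 : (0 : R) < (Nn n)%:R by apply: lt_le_trans N1; exact: expR_gt0.
have L0 : 0 <= ln (Nn n)%:R + x.
  have : ln (expR (- x)) <= ln (Nn n)%:R by rewrite ler_ln ?posrE ?expR_gt0.
  rewrite expRK; lra.
have c0 := c_gt0.
have E : Defs.center R n r s + Defs.scale R n r s * x = (ln (Nn n)%:R + x) / (c / (Nn n)%:R).
  have cpos : (0 : R) < 'C(r, s)%:R := c_gt0.
  rewrite /Defs.center /Defs.scale /c /Nn; field; apply/andP; split; rewrite gt_eqF //.
by rewrite E; apply: divr_ge0 => //; apply: divr_ge0; lra.
Unshelve. all: by end_near.
Qed.

Lemma Bs_cvg m : (fun n => Bs n r s (kk n) R m) @ \oo -->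
  \sum_(j < m.+1) (-1)^+j * (expR (- x) ^+ j / j`!%:R).
Proof.
rewrite /Bs; apply: cvg_big => //; first exact: add_continuous.
move=> j _; apply: cvgM; first exact: cvg_cst.
exact: Sj_cvg.
Qed.

Lemma E_cvg : (fun m => \sum_(j < m.+1) (-1)^+j * (expR (- x) ^+ j / j`!%:R)) @ \oo -->
  expR (- expR (- x)).
Proof.
have h := is_cvg_series_exp_coeff (- expR (- x)).
rewrite -cvg_shiftS in h.
rewrite (_ : (fun m => _) = [sequence series (exp_coeff (- expR (- x))) n.+1]_n); first exact: h.
apply/funext => m /=; rewrite /series /= big_mkord; apply: eq_bigr => j _.
by rewrite /exp_coeff /= [in RHS]exprNn mulrA.
Qed.


Lemma final_cvg : (fun n : nat => @normalized_cdf R n r s x) @ \oo --> @gumbel_cdf R x.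
Proof.
have hE := E_cvg; have hy := y_ge0.
rewrite /gumbel_cdf; apply/cvgrPdist_lt => e e0.
have e2 : 0 < e / 2 by apply: divr_gt0.
move/cvgrPdist_lt: hE => /(_ (e / 2) e2) [M0 _ HM0].
set m := (2 * M0)%N.
have Hm : `| expR (- expR (- x)) - \sum_(j < m.+1) (-1)^+j * (expR (- x) ^+ j / j`!%:R) | < e / 2.
  by apply: HM0; rewrite /m /=; lia.
have Hm1 : `| expR (- expR (- x)) - \sum_(j < m.+2) (-1)^+j * (expR (- x) ^+ j / j`!%:R) | < e / 2.
  by apply: HM0; rewrite /m /=; lia.
have cB := Bs_cvg m; have cB1 := Bs_cvg m.+1.
move/cvgrPdist_lt: cB => /(_ (e / 2) e2) cB.
move/cvgrPdist_lt: cB1 => /(_ (e / 2) e2) cB1.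
have Hid := Hn_id.
near=> n.
have b0 : `| \sum_(j < m.+1) (-1)^+j * (expR (- x) ^+ j / j`!%:R) - Bs n r s (kk n) R m | < e / 2.
  by near: n; exact: cB.
have b1 : `| \sum_(j < m.+2) (-1)^+j * (expR (- x) ^+ j / j`!%:R) - Bs n r s (kk n) R m.+1 | < e / 2.
  by near: n; exact: cB1.
have n1 : ((r.+1)%:R : R) <= n%:R by near: n; exact: Hid.
have rn : (r < n)%N by rewrite -(ler_nat R).
have R0 : (0 < #|rR n r|)%N by rewrite card_rR bin_gt0; lia.
have bon0 := bonf n r s (kk n) R m R0.
have bon1 := bonf n r s (kk n) R m.+1 R0.
have om : odd m = false by rewrite /m oddM.
rewrite om in bon0; rewrite /= om /= in bon1.
have y0 : 0 <= Defs.center R n r s + Defs.scale R n r s * x by near: n; exact: hy.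
have EP : @normalized_cdf R n r s x = Pc n r s (kk n) R.
  rewrite /normalized_cdf /prob_T_le ltNge y0 /= /prob_T_le_nat /Pc card_rR.
  by [].
rewrite EP.
move: Hm Hm1 b0 b1; rewrite !ltr_norml => /andP [h1 h2] /andP [h3 h4] /andP [h5 h6] /andP [h7 h8].
apply/andP; split; lra.
Unshelve. all: by end_near.
Qed.

End Main.

Theorem theorem3 (R : realType) (r s : nat) (hs : (1 <= s)%N) (hsr : (s <= r)%N)
  (x : R) :
  (fun n : nat => @normalized_cdf R n r s x) @ \oo --> @gumbel_cdf R x.
Proof.
exact: (final_cvg R r s x hs hsr).
Qed.
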